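(* Let $M$ and $M'$ be two stable matchings in an instance $I$ of SPA-S, and let $M^\lor$ be the assignment defined from $M,M'$ in the context. If a lecturer $l_k$ is undersubscribed in $M^\lor$, then $l_k$ is undersubscribed in both $M$ and $M'$.
   Context: An instance $I$ of SPA-S consists of a finite set $\mathcal{S}$ of students, a finite set $\mathcal{P}$ of projects and a finite set $\mathcal{L}$ of lecturers. Each student $s_i$ ranks a subset $A_i\subseteq\mathcal{P}$ (its acceptable projects) in strict order. Each project is offered by exactly one lecturer; lecturer $l_k$ offers a nonempty set $P_k\subseteq\mathcal{P}$, the $P_k$ partitioning $\mathcal{P}$. Each lecturer $l_k$ ranks in strict order the students who find at least one project of $P_k$ acceptable. Projects have capacities $c_j\in\mathbb{Z}^+$, lecturers have capacities $d_k\in\mathbb{Z}^+$ with $\max\{c_j:p_j\in P_k\}\le d_k\le\sum\{c_j:p_j\in P_k\}$. A pair $(s_i,p_j)$, $p_j$ offered by $l_k$, is acceptable if $p_j\in A_i$ and $s_i$ is on $l_k$'s list. A matching $M$ is a set of acceptable pairs with each student in at most one pair, $|M(p_j)|\le c_j$, $|M(l_k)|\le d_k$, where for an assignment $M$ (a set of acceptable pairs), $M(s_i)$, $M(p_j)$, $M(l_k)$ denote the project of $s_i$, the students assigned to $p_j$, and the students assigned to projects of $l_k$. Undersubscribed/full means fewer than/exactly capacity many assigned students. An acceptable pair $(s_i,p_j)\notin M$ ($p_j$ offered by $l_k$) blocks $M$ if ($s_i$ is unassigned or prefers $p_j$ to $M(s_i)$) and one of: (P1) $p_j$ and $l_k$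 undersubscribed; (P2) $p_j$ undersubscribed, $l_k$ full, $s_i\in M(l_k)$; (P3) $p_j$ undersubscribed, $l_k$ full, $l_k$ prefers $s_i$ to the worst student of $M(l_k)$; (P4) $p_j$ full and $l_k$ prefers $s_i$ to the worst student of $M(p_j)$. $M$ is stable if it has no blocking pair. Given stable matchings $M,M'$, $M^\lor$ is the assignment in which each student unassigned in both $M$ and $M'$ is unassigned, each student assigned to the same project in both is assigned to that project, and every other student is assigned to the worse (in her preference) of her projects in $M$ and $M'$. *)

(* Defs.v *)
From mathcomp Require Import all_boot.
Set Warnings "-notation-overridden".
Set Implicit Arguments. Unset Strict Implicit. Unset Printing Implicit Defensive.

(* An SPA-S instance. Preference lists are strict orders given by rank
   functions (smaller rank = more preferred), injective on the list. *)
Record spas := SPAS {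
  Student : finType;
  Project : finType;
  Lecturer : finType;
  acc : Student -> {set Project};
  srank : Student -> Project -> nat;
  offerer : Project -> Lecturer;
  lrank : Lecturer -> Student -> nat;
  pcap : Project -> nat;
  lcap : Lecturer -> nat
}.

Section SPAS.
Variable I : spas.
Local Notation S := (Student I).
Local Notation P := (Project I).
Local Notation L := (Lecturer I).

Definition offered (k : L) : {set P} := [set p | offerer p == k].

(* the students on l_k's list: those finding some project of P_k acceptable *)
Definition llist (k : L) : {set S} :=
  [set s | [exists p, (p \in offered k) && (p \in acc s)]].

Definition wf_instance : Prop :=
  [/\ (forall s : S, {in acc s &, injective (srank s)}),
      (forall k, {in llist k &, injective (lrank k)}),
      (forall k, offered k != set0),
      (forall p : P, 0 < pcap p) &
      (forall k, (\max_(p in offered k) pcap p <= lcap k)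
                 /\ (lcap k <= \sum_(p in offered k) pcap p))].

Definition acceptable (s : S) (p : P) : bool :=
  (p \in acc s) && (s \in llist (offerer p)).

Definition assignment := S -> option P.

Definition Mp (M : assignment) (p : P) : {set S} := [set s | M s == Some p].
Definition Ml (M : assignment) (k : L) : {set S} :=
  [set s | if M s is Some p then offerer p == k else false].

Definition is_matching (M : assignment) : Prop :=
  [/\ (forall s p, M s = Some p -> acceptable s p),
      (forall p, #|Mp M p| <= pcap p) &
      (forall k, #|Ml M k| <= lcap k)].

Definition p_under (M : assignment) p := #|Mp M p| < pcap p.
Definition p_full (M : assignment) p := #|Mp M p| == pcap p.
Definition l_under (M : assignment) k := #|Ml M k| < lcap k.
Definition l_full (M : assignment) k := #|Ml M k| == lcap k.

Definition worst_of (k : L) (T : {set S}) (w : S) : Prop :=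
  w \in T /\ forall t, t \in T -> lrank k t <= lrank k w.

Definition prefers_to_worst (k : L) (s : S) (T : {set S}) : Prop :=
  exists w, worst_of k T w /\ lrank k s < lrank k w.

Definition blocking (M : assignment) (s : S) (p : P) : Prop :=
  let k := offerer p in
  [/\ acceptable s p, M s <> Some p,
      (M s = None \/ exists q, M s = Some q /\ srank s p < srank s q) &
      [\/ p_under M p /\ l_under M k,
          [/\ p_under M p, l_full M k & s \in Ml M k],
          [/\ p_under M p, l_full M k & prefers_to_worst k s (Ml M k)] |
          p_full M p /\ prefers_to_worst k s (Mp M p)]].

Definition stable (M : assignment) : Prop :=
  is_matching M /\ forall s p, ~ blocking M s p.

Definition Mvee (M M' : assignment) : assignment := fun s =>
  match M s, M' s with
  | None, None => None
  | Some p, None => Some p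
  | None, Some q => Some q
  | Some p, Some q =>
      if p == q then Some p
      else if srank s p < srank s q then Some q else Some p
  end.

End SPAS.

(* Main.v *)
Require Import Defs.
From mathcomp Require Import all_boot.
From mathcomp Require Import zify.
From Stdlib Require Import Classical.
Set Implicit Arguments. Unset Strict Implicit. Unset Printing Implicit Defensive.

Section Proof.
Variable I : spas.
Hypothesis wf : wf_instance I.
Local Notation S := (Student I).
Local Notation P := (Project I).
Local Notation L := (Lecturer I).

Definition pref (M1 M2 : assignment I) (s : S) : bool :=
  match M1 s with
  | Some p => match M2 s with None => true | Some q => srank s p < srank s q end
  | None => false end.

Definition PX (M1 M2 : assignment I) : {set S} := [set s | pref M1 M2 s].

Lemma inPX (M1 M2 : assignment I) (s : S) : (s \in PX M1 M2) = pref M1 M2 s.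
Proof. by rewrite inE. Qed.

Lemma srank_inj (s : S) (p q : P) : p \in acc s -> q \in acc s -> srank s p = srank s q -> p = q.
Proof. case: wf => H _ _ _ _ hp hq; exact: H. Qed.

Lemma lrank_inj (k : L) (u v : S) : u \in llist k -> v \in llist k -> lrank k u = lrank k v -> u = v.
Proof. case: wf => _ H _ _ _ hu hv; exact: H. Qed.

Lemma acc_of (M : assignment I) (s : S) (p : P) : stable M -> M s = Some p -> acceptable s p.
Proof. by case=> [[H _ _] _]; apply: H. Qed.

Lemma acc_llist (s : S) (p : P) : acceptable s p -> s \in llist (offerer p).
Proof. by case/andP. Qed.

Lemma acc_acc (s : S) (p : P) : acceptable s p -> p \in acc s.
Proof. by case/andP. Qed.

Lemma worst_ex (k : L) (T : {set S}) (u : S) : u \in T -> exists w, worst_of k T w.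
Proof.
move=> uT.
case: (@arg_maxnP _ u (fun x => x \in T) (lrank k) uT) => w wT wmax.
by exists w; split.
Qed.

Lemma not_ptw (k : L) (s : S) (T : {set S}) : ~ prefers_to_worst k s T -> forall u, u \in T -> lrank k u <= lrank k s.
Proof.
move=> H u uT; have [w [wT wm]] := worst_ex k uT.
rewrite leqNgt; apply/negP => lt; apply: H; exists w; split => //.
exact: leq_trans lt (wm _ uT).
Qed.

Lemma ptw_of (k : L) (s : S) (T : {set S}) (u : S) : u \in T -> lrank k s < lrank k u -> prefers_to_worst k s T.
Proof.
move=> uT lt; have [w [wT wm]] := worst_ex k uT.
exists w; split => //; exact: leq_trans lt (wm _ uT).
Qed.

Lemma MpMl (M : assignment I) (p : P) (s : S) : s \in Mp M p -> s \in Ml M (offerer p).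
Proof. by rewrite !inE => /eqP ->. Qed.

Lemma blocks_if_better (M : assignment I) (t : S) (p : P) (s : S) :
  stable M -> acceptable t p -> M t <> Some p ->
  (M t = None \/ exists q, M t = Some q /\ srank t p < srank t q) ->
  s \in Mp M p -> lrank (offerer p) t < lrank (offerer p) s -> False.
Proof.
move=> [[_ Hp Hl] Hst] acc Mt pr sin lt.
apply: (Hst t p); rewrite /blocking; split => //.
case: (boolP (p_under M p)) => pu.
- case: (boolP (l_under M (offerer p))) => lu; first by apply: Or41.
  have lf : l_full M (offerer p) by rewrite /l_full eqn_leq Hl leqNgt.
  case: (boolP (t \in Ml M (offerer p))) => tin; first by apply: Or42.
  apply: Or43; split => //; exact: ptw_of (MpMl sin) lt.
- apply: Or44; split; first by rewrite /p_full eqn_leq Hp leqNgt.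
  exact: ptw_of sin lt.
Qed.

Lemma caseAB (M M' : assignment I) (s : S) (p : P) : stable M -> stable M' -> M s = Some p -> pref M M' s ->
  (p_full M' p /\ forall u, u \in Mp M' p -> lrank (offerer p) u < lrank (offerer p) s) \/
  (l_full M' (offerer p) /\ forall u, u \in Ml M' (offerer p) -> lrank (offerer p) u < lrank (offerer p) s).
Proof.
move=> stM stM' Ms pr.
have acc := acc_of stM Ms.
have [[Hm Hp Hl] Hst] := stM'.
have nM' : M' s <> Some p.
  by move=> e; move: pr; rewrite /pref Ms e ltnn.
have pr' : M' s = None \/ exists q, M' s = Some q /\ srank s p < srank s q.
  move: pr; rewrite /pref Ms; case: (M' s) => [q pr|_]; [by right; exists q | by left].
have sl := acc_llist acc.
have strict : forall u, u \in llist (offerer p) -> u <> s -> lrank (offerer p) u <= lrank (offerer p) s -> lrank (offerer p) u < lrank (offerer p) s.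
  move=> u ul us le; rewrite ltn_neqAle le andbT; apply/eqP => e; exact: us (lrank_inj ul sl e).
case: (boolP (p_under M' p)) => pu.
- right.
  case: (boolP (l_under M' (offerer p))) => lu.
    by exfalso; apply: (Hst s p); split => //; apply: Or41.
  have lf : l_full M' (offerer p) by rewrite /l_full eqn_leq Hl leqNgt.
  have sn : s \notin Ml M' (offerer p).
    by apply/negP => sin; apply: (Hst s p); split => //; apply: Or42.
  split => // u uin.
  have np : ~ prefers_to_worst (offerer p) s (Ml M' (offerer p)).
    by move=> h; apply: (Hst s p); split => //; apply: Or43.
  apply: (strict u _ _ (not_ptw np uin)).
  + move: uin; rewrite inE; case e: (M' u) => [q|] // /eqP <-.
    exact: acc_llist (Hm _ _ e).
  + by move=> eus; move: sn; rewrite -eus uin.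
- left; have pf : p_full M' p by rewrite /p_full eqn_leq Hp leqNgt.
  split => // u uin.
  have np : ~ prefers_to_worst (offerer p) s (Mp M' p).
    by move=> h; apply: (Hst s p); split => //; apply: Or44.
  apply: (strict u _ _ (not_ptw np uin)).
  + move: uin; rewrite inE => /eqP e; exact: acc_llist (Hm _ _ e).
  + by move=> eus; apply: nM'; move: uin; rewrite inE eus => /eqP.
Qed.

Lemma noX (M M' : assignment I) (p : P) (s : S) : stable M -> stable M' -> M s = Some p ->
  (forall u, u \in Mp M' p -> lrank (offerer p) u < lrank (offerer p) s) ->
  forall t, t \in Mp M' p -> ~~ pref M' M t.
Proof.
move=> stM stM' Ms H t tin; apply/negP => pr.
have e : M' t = Some p by move: tin; rewrite inE => /eqP.
apply: (blocks_if_better (s:=s) stM (acc_of stM' e)).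
- by move=> e'; move: pr; rewrite /pref e e' ltnn.
- move: pr; rewrite /pref e; case: (M t) => [q pr|_]; [by right; exists q | by left].
- by rewrite inE Ms.
- exact: H.
Qed.

Lemma Eeq (M1 M2 : assignment I) (s : S) : stable M1 -> stable M2 -> ~~ pref M1 M2 s -> ~~ pref M2 M1 s -> M1 s = M2 s.
Proof.
move=> st1 st2; rewrite /pref.
case e1: (M1 s) => [p|]; case e2: (M2 s) => [q|] h1 h2 //.
congr Some; apply: srank_inj (acc_acc (acc_of st1 e1)) (acc_acc (acc_of st2 e2)) _.
by apply/eqP; rewrite eqn_leq leqNgt h2 leqNgt h1.
Qed.

Lemma card_aux (A B Y : {set S}) : #|B| <= #|A| -> A :\: Y \subset B :\: Y -> #|B :&: Y| <= #|A :&: Y|.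
Proof.
move=> hBA hsub; have := subset_leq_card hsub.
have := cardsID Y A; have := cardsID Y B. lia.
Qed.

Lemma gen_proj (M1 M2 : assignment I) (q : P) : stable M1 -> stable M2 ->
  (forall u, u \in Mp M1 q -> ~~ pref M1 M2 u) -> #|Mp M2 q| <= #|Mp M1 q| ->
  #|Mp M2 q :&: PX M2 M1| <= #|Mp M1 q :&: PX M2 M1|.
Proof.
move=> st1 st2 H hc; apply: card_aux hc _.
apply/subsetP => u; rewrite !inE => /andP [nx uin].
have uin' : u \in Mp M1 q by rewrite inE.
by rewrite nx -(Eeq st1 st2 (H _ uin') nx).
Qed.

Lemma sum_proj (M : assignment I) (l : L) (Y : {set S}) : offered l != set0 ->
  #|Ml M l :&: Y| = \sum_(q in offered l) #|Mp M q :&: Y|.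
Proof.
case/set0Pn => q0 _.
rewrite -sum1_card (partition_big (fun s => odflt q0 (M s)) (mem (offered l))).
- apply: eq_bigr => q ql; rewrite -sum1_card; apply: eq_bigl => s.
  move: ql; rewrite !inE; case: (M s) => [p|] //=.
  case: (p =P q) => [->|npq] ql; first by rewrite ql eqxx andbT.
  rewrite andbF; case: eqP => // -[] e; by case: npq.
- by move=> s; rewrite !inE; case: (M s) => [p|] //= /andP [].
Qed.


Lemma pref_excl (M M' : assignment I) (s : S) : pref M M' s -> ~~ pref M' M s.
Proof.
rewrite /pref; case: (M s) => [p|] //; case: (M' s) => [q|] // h.
by rewrite -leqNgt ltnW.
Qed.

Lemma decomp (M M' : assignment I) (A : {set S}) :
  #|A| = #|A :&: PX M M'| + #|A :&: PX M' M| + #|(A :\: PX M M') :\: PX M' M|.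
Proof.
have e : (A :\: PX M M') :&: PX M' M = A :&: PX M' M.
  apply/setP => s; rewrite !inE; case h: (pref M' M s); rewrite ?andbF ?andbT //.
  by have := @pref_excl M' M s h; case: (pref M M' s).
have := cardsID (PX M M') A; have := cardsID (PX M' M) (A :\: PX M M').
rewrite e; lia.
Qed.

Lemma Eparts (M M' : assignment I) (A A' : {set S}) :
  stable M -> stable M' ->
  (forall s, M s = M' s -> (s \in A) = (s \in A')) ->
  (A :\: PX M M') :\: PX M' M = (A' :\: PX M M') :\: PX M' M.
Proof.
move=> stM stM' H; apply/setP => s; rewrite !inE.
case h1: (pref M' M s) => //=; case h2: (pref M M' s) => //=.
by rewrite (H s (Eeq stM stM' (negbT h2) (negbT h1))).
Qed.

Lemma local (M M' : assignment I) (l : L) : stable M -> stable M' ->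
  #|Ml M l :&: PX M M'| <= #|Ml M' l :&: PX M M'|.
Proof.
move=> stM stM'.
have ne : offered l != set0 by case: wf.
have [[_ HpM HlM] _] := stM. have [[_ HpM' HlM'] _] := stM'.
case: (classic (exists s, s \in Ml M l :&: PX M M' /\ l_full M' l /\
          forall u, u \in Ml M' l -> lrank l u < lrank l s)).
- move=> [s [sin [lf Hs]]].
  move: sin; rewrite in_setI => /andP [sl prs].
  have hX' : #|Ml M' l :&: PX M' M| <= #|Ml M l :&: PX M' M|.
    rewrite !sum_proj //; apply: leq_sum => q ql.
    have oq : offerer q = l by move: ql; rewrite inE => /eqP.
    case: (set_0Vmem (Mp M' q :&: PX M' M)) => [-> | [t tin]]; first by rewrite cards0.
    move: tin; rewrite in_setI => /andP [tq prt].
    have Mt : M' t = Some q by move: tq; rewrite inE => /eqP.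
    rewrite inPX in prt.
    case: (caseAB stM' stM Mt prt).
    + move=> [pf Ht].
      apply: (gen_proj stM stM').
      * exact: (noX stM' stM Mt Ht).
      * by move/eqP: pf => ->; exact: HpM'.
    + rewrite oq => -[_ Ht]; exfalso.
      have a := Ht s sl.
      have tl : t \in Ml M' l by rewrite -oq; exact: MpMl tq.
      have b := Hs t tl.
      by have := ltn_trans a b; rewrite ltnn.
  have c1 : #|Ml M l| <= #|Ml M' l| by move/eqP: lf => ->; exact: HlM.
  have d1 := decomp M M' (Ml M l). have d2 := decomp M M' (Ml M' l).
  have eE : (Ml M l :\: PX M M') :\: PX M' M = (Ml M' l :\: PX M M') :\: PX M' M.
    by apply: Eparts => // x e; rewrite !inE e.
  rewrite eE in d1; lia.
- move=> nB.
  rewrite !sum_proj //; apply: leq_sum => p pl.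
  have op : offerer p = l by move: pl; rewrite inE => /eqP.
  case: (set_0Vmem (Mp M p :&: PX M M')) => [-> | [s sin]]; first by rewrite cards0.
  move: sin; rewrite in_setI => /andP [sp prs].
  have Ms : M s = Some p by move: sp; rewrite inE => /eqP.
  rewrite inPX in prs.
  case: (caseAB stM stM' Ms prs).
  + move=> [pf Hs].
    apply: (gen_proj stM' stM).
    * exact: (noX stM stM' Ms Hs).
    * by move/eqP: pf => ->; exact: HpM.
  + rewrite op => -[lf Hs]; exfalso; apply: nB; exists s; split => //.
    by rewrite in_setI inPX prs andbT -op; exact: MpMl sp.
Qed.

End Proof.


Theorem lemma9 (I : spas) (M M' : assignment I) (k : Lecturer I) :
  wf_instance I -> stable M -> stable M' ->
  l_under (Mvee M M') k -> l_under M k /\ l_under M' k.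
Proof.
move=> wf stM stM' hv; rewrite /l_under in hv *.
split; apply: leq_ltn_trans hv.
- have Lc := @local I wf M M' k stM stM'.
  set X := PX M M' in Lc *.
  have U : #|(Ml M' k :&: X) :|: (Ml M k :\: X)| = #|Ml M' k :&: X| + #|Ml M k :\: X|.
    rewrite cardsU (_ : (Ml M' k :&: X) :&: (Ml M k :\: X) = set0) ?cards0 ?subn0 //.
    apply/setP => s; rewrite !inE; case: (pref _ _ s); by rewrite /= ?andbF ?andbT ?andFb.
  have hsub : (Ml M' k :&: X) :|: (Ml M k :\: X) \subset Ml (Mvee M M') k.
    apply/subsetP => s; rewrite /X !inE /Mvee /pref.
    case e1: (M s) => [p|]; case e2: (M' s) => [q|]; rewrite /= ?andbF ?andbT ?orbF ?andFb //.
    case: (p =P q) => [<-|npq]; first by rewrite ltnn /= andbF.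
    by case: (srank s p < srank s q); rewrite /= ?andbT ?andbF ?orbF.
  have := subset_leq_card hsub; have := cardsID X (Ml M k). lia.
- have Lc := @local I wf M' M k stM' stM.
  set X := PX M' M in Lc *.
  have U : #|(Ml M k :&: X) :|: (Ml M' k :\: X)| = #|Ml M k :&: X| + #|Ml M' k :\: X|.
    rewrite cardsU (_ : (Ml M k :&: X) :&: (Ml M' k :\: X) = set0) ?cards0 ?subn0 //.
    apply/setP => s; rewrite !inE; case: (pref _ _ s); by rewrite /= ?andbF ?andbT ?andFb.
  have hsub : (Ml M k :&: X) :|: (Ml M' k :\: X) \subset Ml (Mvee M M') k.
    apply/subsetP => s; rewrite /X !inE /Mvee /pref.
    case e1: (M s) => [p|]; case e2: (M' s) => [q|]; rewrite /= ?andbF ?andbT ?orbF ?andFb //.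
    case: (p =P q) => [<-|npq]; first by rewrite ltnn /= andbF.
    case: (ltngtP (srank s q) (srank s p)) => h; rewrite /= ?andbT ?andbF ?orbF //.
    exfalso; apply: npq; apply: (srank_inj wf _ _ (esym h)).
    + by case/andP: (acc_of stM e1).
    + by case/andP: (acc_of stM' e2).
  have := subset_leq_card hsub; have := cardsID X (Ml M' k). lia.
Qed.
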